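(* Assume the reduced model family is $\sigma$-admissible and let $u^*(w)$ be the estimator obtained by surrogate model selection using the residual surrogate $\mathcal S(v,\mathcal M)=\min_{y\in Y}\mathcal R(v,y)$. For $y\in Y$ let $u=u(y)$ and $w=P_Wu$, and let $y^*\in\operatorname{argmin}_{y'\in Y}\mathcal R(u^*(w),y')$. Then $$\|u(y)-u(y^* )\|\le(1+\kappa)\delta_{\kappa\sigma},\qquad\kappa=R/r.$$ If in addition $\delta_0=0$ and $\mu(\mathcal M,W):=\frac12\sup_{\sigma'>0}\delta_{\sigma'}/\sigma'<\infty$, then $$\|u(y)-u(y^* )\|\le(2\mu(\mathcal M,W)+1)\kappa\sigma.$$
   Context: Let $V$ and $Z$ be real Hilbert spaces, with $\|\cdot\|$ the norm of $V$ and $Z'$ the dual of $Z$. Let $Y\subset\mathbb R^d$ be compact. For $y\in Y$ let $A(y):V\to Z'$ be a bounded linear isomorphism and $f(y)\in Z'$, with $y\mapsto A(y)$ and $y\mapsto f(y)$ continuous. Assume there are constants $0<r\le R$ such that $\|A(y)\|_{V\to Z'}\le R$ and $\|A(y)^{-1}\|_{Z'\to V}\le r^{-1}$ for all $y\in Y$. Let $u(y)=A(y)^{-1}f(y)$ and $\mathcal M=\{u(y):y\in Y\}$. Define the residual $\mathcal R(v,y)=\|A(y)v-f(y)\|_{Z'}$, so that $r\|v-u(y)\|\le\mathcal R(v,y)\le R\|v-u(y)\|$. Let $W\subset V$ be a subspace of finite dimension $m$, let $P_W$ be the orthogonal projection onto $W$, and let $W^\perp$ be its orthogonal complement. For $w\in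 W$ put $V_w=w+W^\perp$. For $\sigma\ge0$ define $\mathcal M_\sigma=\{v:\operatorname{dist}(v,\mathcal M)\le\sigma\}$ and $\delta_\sigma=\sup\{\|u-v\|:u,v\in\mathcal M_\sigma,u-v\in W^\perp\}$. For a finite-dimensional subspace $E$ let $\mu(E,W)=\sup_{v\in E\setminus\{0\}}\|v\|/\|P_Wv\|$, with $\mu(\{0\},W)=1$. A reduced model family consists of: - sets $\mathcal M_1,\dots,\mathcal M_K$ with $\mathcal M=\bigcup_k\mathcal M_k$; - affine spaces $V_k=\bar u_k+\bar V_k$ with $\dim\bar V_k=n_k\le m$; - numbers $\varepsilon_k\ge\sup_{u\in\mathcal M_k}\operatorname{dist}(u,V_k)$; - constants $\mu_k=\mu(\bar V_k,W)<\infty$. The family is $\sigma$-admissible if $\mu_k\varepsilon_k\le\sigma$ for all $k$. PBDW estimators: $u_k^*(w)=\operatorname{argmin}\{\operatorname{dist}(v,V_k):v\in V_w\}$. Surrogate model selection picks $k^*(w)$ as a minimizer of $k\mapsto\mathcal S(u_k^*(w),\mathcal M)$ and sets $u^*(w)=u^*_{k^*(w)}(w)$. *)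

(* Defs.v *)
From HB Require Import structures.
From mathcomp Require Import all_boot all_order all_algebra.
From mathcomp Require Import all_classical all_reals all_analysis.
Set Implicit Arguments. Unset Strict Implicit. Unset Printing Implicit Defensive.
Import Order.TTheory GRing.Theory Num.Theory.
Import numFieldNormedType.Exports.
Local Open Scope classical_set_scope.
Local Open Scope ring_scope.

Section Defs.
Context {R : realType}.

(* ip is a real inner product inducing the norm of V (|v|^2 = <v,v>);
   together with completeness of V this makes V a real Hilbert space. *)
Definition inner_product (V : normedModType R) (ip : V -> V -> R) : Prop :=
  [/\ forall u v, ip u v = ip v u,
      forall (a : R) u v w, ip (a *: u + v) w = a * ip u w + ip v w &
      forall v, `|v| ^+ 2 = ip v v].

Section Vsp.
Variable V : normedModType R.

Definition span_of (n : nat) (b : 'I_n -> V) : set V :=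
  [set x | exists c : 'I_n -> R, x = \sum_(i < n) c i *: b i].

Definition lin_indep (n : nat) (b : 'I_n -> V) : Prop :=
  forall c : 'I_n -> R, \sum_(i < n) c i *: b i = 0 -> forall i, c i = 0.

Definition subspace_of_dim (E : set V) (n : nat) : Prop :=
  exists b : 'I_n -> V, lin_indep b /\ E = span_of b.

Definition orth (ip : V -> V -> R) (E : set V) : set V :=
  [set v | forall w, E w -> ip v w = 0].

Definition affine (a : V) (E : set V) : set V := [set a + x | x in E].

Definition dist (v : V) (S : set V) : R := inf [set `|v - x| | x in S].

Definition Msig (M : set V) (s : R) : set V := [set v | dist v M <= s].

Definition delta (ip : V -> V -> R) (W M : set V) (s : R) : \bar R :=
  ereal_sup [set x | exists u v, [/\ Msig M s u, Msig M s v,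
                       orth ip W (u - v) & x = (`|u - v|)%:E]].

(* mu(E, W) where P is the orthogonal projection onto W; +oo if some
   nonzero v in E has P v = 0; mu({0},W) = 1 *)
Definition muEW (P : V -> V) (E : set V) : \bar R :=
  if `[< E `<=` [set 0] >] then 1%E
  else ereal_sup [set (if P v == 0 then +oo%E else (`|v| / `|P v|)%:E)
                  | v in [set v | E v /\ v != 0]].

Definition muMW (ip : V -> V -> R) (W M : set V) : \bar R :=
  let half : R := (2 : R)^-1 in
  (half%:E * ereal_sup [set x | exists s : R, (0 < s)%R /\ x = delta ip W M s * (s^-1)%R%:E])%E.
End Vsp.

Section Model.
Variables (V Z : normedModType R) (d : nat).

Definition resid (A : 'rV[R]_d -> V -> Z) (f : 'rV[R]_d -> Z) (v : V) (y : 'rV[R]_d) : R :=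
  `|A y v - f y|.

Definition surrogate (Y : set 'rV[R]_d) (A : 'rV[R]_d -> V -> Z) (f : 'rV[R]_d -> Z) (v : V) : R :=
  inf [set resid A f v y | y in Y].

Definition opnorm_continuous_on (Y : set 'rV[R]_d) (A : 'rV[R]_d -> V -> Z) : Prop :=
  forall y, Y y -> forall e : R, 0 < e ->
    \forall y' \near y, Y y' -> forall v, `|A y' v - A y v| <= e * `|v|.

Definition manifold (Y : set 'rV[R]_d) (Ainv : 'rV[R]_d -> Z -> V) (f : 'rV[R]_d -> Z) : set V :=
  [set Ainv y (f y) | y in Y].
End Model.

Definition pbdw_estimator {V : normedModType R} (ip : V -> V -> R) (W : set V)
    (Vk : set V) (ustar : V -> V) : Prop :=
  forall w, W w -> affine w (orth ip W) (ustar w) /\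
    forall v, affine w (orth ip W) v -> dist (ustar w) Vk <= dist v Vk.
End Defs.

(* Main.v *)
Require Import Defs.
From HB Require Import structures.
From mathcomp Require Import all_boot all_order all_algebra.
From mathcomp Require Import all_classical all_reals all_analysis.
From mathcomp Require Import ring lra zify.
Import Order.TTheory GRing.Theory Num.Theory.
Import numFieldNormedType.Exports.
Local Open Scope classical_set_scope.
Local Open Scope ring_scope.
Section IP.
Variables (R : realType) (V : normedModType R) (ip : V -> V -> R).
Hypothesis hip : inner_product ip.

Lemma ipC u v : ip u v = ip v u. Proof. by move: hip; rewrite /inner_product => -[]. Qed.
Lemma ipL a u v w : ip (a *: u + v) w = a * ip u w + ip v w.
Proof. by move: hip; rewrite /inner_product => -[]. Qed.
Lemma ipN v : `|v| ^+ 2 = ip v v.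
Proof. by move: hip; rewrite /inner_product => -[]. Qed.
Lemma ipDl u v w : ip (u + v) w = ip u w + ip v w.
Proof. by have := ipL 1 u v w; rewrite scale1r mul1r. Qed.
Lemma ip0l w : ip 0 w = 0.
Proof. have := ipDl 0 0 w; rewrite addr0 => h.
lra. Qed.
Lemma ipZl a u w : ip (a *: u) w = a * ip u w.
Proof. by rewrite -[a *: u]addr0 ipL ip0l addr0. Qed.
Lemma ipNl u w : ip (- u) w = - ip u w.
Proof. by rewrite -scaleN1r ipZl mulN1r. Qed.
Lemma ipBl u v w : ip (u - v) w = ip u w - ip v w.
Proof. by rewrite ipDl ipNl. Qed.
Lemma ipDr u v w : ip w (u + v) = ip w u + ip w v.
Proof. by rewrite ipC ipDl ![ip _ w]ipC. Qed.
Lemma ipZr a u w : ip w (a *: u) = a * ip w u.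
Proof. by rewrite ipC ipZl ipC. Qed.
Lemma ip0r w : ip w 0 = 0.
Proof. by rewrite ipC ip0l. Qed.
Lemma ipNr u w : ip w (- u) = - ip w u.
Proof. by rewrite ipC ipNl ipC. Qed.
Lemma ipBr u v w : ip w (u - v) = ip w u - ip w v.
Proof. by rewrite ipDr ipNr. Qed.
Lemma ip_sumr n (F : 'I_n -> V) w : ip w (\sum_(i < n) F i) = \sum_(i < n) ip w (F i).
Proof. by elim/big_rec2: _ => [|i x y _ <-]; rewrite ?ip0r ?ipDr. Qed.
Lemma normD2 u v : `|u + v| ^+ 2 = `|u| ^+ 2 + 2 * ip u v + `|v| ^+ 2.
Proof. rewrite !ipN ipDl !ipDr (ipC v u); lra. Qed.
Lemma normB2 u v : `|u - v| ^+ 2 = `|u| ^+ 2 - 2 * ip u v + `|v| ^+ 2.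
Proof. rewrite normD2 ipNr normrN; lra. Qed.
Lemma ipCS u v : ip u v <= `|u| * `|v|.
Proof.
have [v0|vn0] := eqVneq v 0; first by rewrite v0 ip0r normr0 mulr0.
have nv : 0 < `|v| by rewrite normr_gt0.
set c := ip u v.
have h := ipN ((`|v| ^+ 2) *: u - c *: v).
rewrite ipBl !ipBr !ipZl !ipZr -!ipN (ipC v u) -/c in h.
have h0 := sqr_ge0 `|(`|v| ^+ 2) *: u - c *: v|.
have key : c ^+ 2 <= (`|u| * `|v|) ^+ 2.
  rewrite h in h0. have v2 : 0 < `|v| ^+ 2 by rewrite exprn_gt0.
  rewrite exprMn. nra.
have hp : 0 <= `|u| * `|v| by rewrite mulr_ge0.
move: key hp; set n := `|u| * `|v| => key hp.
rewrite leNgt; apply/negP => hc; nra.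
Qed.

Section Span.
Variables (n : nat) (b : 'I_n -> V).
Lemma span0 : span_of b 0.
Proof. by exists (fun=> 0); rewrite big1 // => i _; rewrite scale0r. Qed.
Lemma spanD x y : span_of b x -> span_of b y -> span_of b (x + y).
Proof.
move=> [c ->] [e ->]; exists (fun i => c i + e i).
by rewrite -big_split /=; apply: eq_bigr => i _; rewrite scalerDl.
Qed.
Lemma spanZ a x : span_of b x -> span_of b (a *: x).
Proof.
move=> [c ->]; exists (fun i => a * c i).
by rewrite scaler_sumr; apply: eq_bigr => i _; rewrite scalerA.
Qed.
Lemma spanN x : span_of b x -> span_of b (- x).
Proof. by move=> h; rewrite -scaleN1r; apply: spanZ. Qed.
Lemma spanB x y : span_of b x -> span_of b y -> span_of b (x - y).
Proof. by move=> hx hy; apply: spanD => //; apply: spanN. Qed.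
Lemma span_gen i : span_of b (b i).
Proof.
exists (fun j => if j == i then 1 else 0).
rewrite (bigD1 i) //= eqxx scale1r big1 ?addr0 // => j /negbTE ->.
by rewrite scale0r.
Qed.
Lemma span_sum m (F : 'I_m -> V) : (forall i, span_of b (F i)) ->
  span_of b (\sum_(i < m) F i).
Proof.
move=> h; elim/big_rec: _ => [|i x _ hx]; first exact: span0.
exact: spanD.
Qed.
Lemma orth_span x : (forall i, ip x (b i) = 0) ->
  forall z, span_of b z -> ip x z = 0.
Proof.
move=> h z [c ->]; rewrite ip_sumr big1 // => i _.
by rewrite ipZr h mulr0.
Qed.
End Span.

Lemma proj_ex n (b : 'I_n -> V) v :
  exists p, span_of b p /\ forall i, ip (v - p) (b i) = 0.
Proof.
elim: n b v => [|n IH] b v.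
  by exists 0; split; [exact: span0| case].
set b' := fun i : 'I_n => b (widen_ord (leqnSn n) i).
have sub : forall x, span_of b' x -> span_of b x.
  move=> x [c ->]; apply: span_sum => i; apply: spanZ; exact: span_gen.
have [pl [hpl opl]] := IH b' (b ord_max).
set q := b ord_max - pl.
have [p' [hp' op']] := IH b' v.
have qo : forall z, span_of b' z -> ip q z = 0 by apply: orth_span.
have p'o : forall z, span_of b' z -> ip (v - p') z = 0 by apply: orth_span.
have bsplit : forall i : 'I_n.+1, (exists j, i = widen_ord (leqnSn n) j) \/ i = ord_max.
  move=> i; have [lt|ge] := ltnP i n.
    by left; exists (Ordinal lt); apply: val_inj.
  by right; apply: val_inj => /=; have := ltn_ord i; lia.
have [q0|qn0] := eqVneq (ip q q) 0.
  exists p'; split; first exact: sub.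
  move=> i; case: (bsplit i) => [[j ->]|->]; first exact: op'.
  have -> : b ord_max = q + pl by rewrite /q subrK.
  rewrite ipDr (p'o _ hpl) addr0.
  have : `|q| ^+ 2 = 0 by rewrite ipN.
  move/eqP; rewrite expf_eq0 /= normr_eq0 => /eqP ->.
  by rewrite ip0r.
set a := ip v q / ip q q.
exists (p' + a *: q); split.
  apply: spanD; first exact: sub.
  apply: spanZ; apply: spanB; first exact: span_gen.
  exact: sub.
have key : ip (v - (p' + a *: q)) q = 0.
  rewrite opprD addrA ipBl ipZl ipBl (ipC p' q) (qo _ hp') subr0.
  by rewrite /a mulfVK // subrr.
move=> i; case: (bsplit i) => [[j ->]|->].
  rewrite opprD addrA ipBl ipZl (op' j) (qo _ (@span_gen _ b' j)).
  by rewrite mulr0 subrr.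
have -> : b ord_max = q + pl by rewrite /q subrK.
rewrite ipDr key add0r opprD addrA ipBl ipZl (p'o _ hpl) (qo _ hpl).
by rewrite mulr0 subrr.
Qed.

Lemma ip_self0 x : ip x x = 0 -> x = 0.
Proof. by rewrite -ipN => /eqP; rewrite expf_eq0 /= normr_eq0 => /eqP. Qed.

Lemma core (W : set V) (Pf Ph fp hp g e : V) (mu : R) :
  (forall x y, W x -> W y -> W (x - y)) ->
  W Pf -> W Ph -> W g -> orth ip W fp -> orth ip W hp -> orth ip W e ->
  e = (Pf + fp) + (Ph + hp) - g -> ip g (Ph + hp) = 0 ->
  ip (Pf + fp) (Ph + hp) = 0 ->
  `|Ph + hp| <= mu * `|Ph| -> 1 <= mu ->
  `|e| <= mu * `|Pf + fp|.
Proof.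
move=> hWB WPf WPh Wg ofp ohp oe he og hof hmu mu1.
set x := g - Pf - Ph.
have Wx : W x by apply: (hWB) => //; apply: (hWB).
have x0 : x = 0.
  apply: ip_self0.
  have := oe x Wx; rewrite he !ipBl !ipDl (ofp x Wx) (ohp x Wx).
  lra.
have gE : g = Pf + Ph.
  by apply/eqP; rewrite -subr_eq0 opprD addrA; apply/eqP.
have eE : e = fp + hp.
  by rewrite he gE addrACA [X in X - _]addrC addrK.
have o1 : ip Pf hp = 0 by rewrite ipC ohp.
have o2 : ip Ph hp = 0 by rewrite ipC ohp.
have o3 : ip fp Ph = 0 by rewrite ofp.
have o4 : ip fp Pf = 0 by rewrite ofp.
have o5 : ip Ph fp = 0 by rewrite ipC ofp.
have o6 : ip Pf fp = 0 by rewrite ipC ofp.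
move: og hof; rewrite gE !ipDl !ipDr ?o1 ?o2 ?o4 ?o3 ?o5 ?o6 ?addr0 ?add0r => og hof.
have nf : `|Pf + fp| ^+ 2 = `|Pf| ^+ 2 + `|fp| ^+ 2 by rewrite normD2 o6 mulr0 addr0.
have nh : `|Ph + hp| ^+ 2 = `|Ph| ^+ 2 + `|hp| ^+ 2 by rewrite normD2 o2 mulr0 addr0.
have ne : `|e| ^+ 2 = `|fp| ^+ 2 + 2 * ip fp hp + `|hp| ^+ 2 by rewrite eE normD2.
have cs1 := ipCS fp hp.
have cs2 := ipCS Pf (- Ph); rewrite ipNr normrN in cs2.
have pp : ip Ph Ph = `|Ph| ^+ 2 by rewrite ipN.
have hmu2 : `|Ph + hp| ^+ 2 <= (mu * `|Ph|) ^+ 2.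
  by rewrite ler_sqr ?nnegrE ?mulr_ge0 //; lra.
move: hmu2 nf nh ne cs1 cs2 og hof pp.
set a := `|Pf|; set b := `|fp|; set p := `|Ph|; set q := `|hp|.
set NF := `|Pf + fp|; set NH := `|Ph + hp|; set NE := `|e|.
move=> hmu2 nf nh ne cs1 cs2 og hof pp.
have a0 : 0 <= a by apply: normr_ge0.
have b0 : 0 <= b by apply: normr_ge0.
have p0 : 0 <= p by apply: normr_ge0.
have q0 : 0 <= q by apply: normr_ge0.
have NF0 : 0 <= NF by apply: normr_ge0.
have NE0 : 0 <= NE by apply: normr_ge0.
have pa : p ^+ 2 <= a * p by lra.
have pbq : p ^+ 2 <= b * q by lra.
have q2 : q ^+ 2 <= (mu ^+ 2 - 1) * p ^+ 2 by rewrite exprMn in hmu2; lra.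
have pa2 : p ^+ 2 <= a ^+ 2.
  have [->|pp0] := eqVneq p 0; first by rewrite expr0n /=; nra.
  have pg : 0 < p by rewrite lt0r pp0.
  have : p <= a by nra.
  nra.
have m21 : 0 <= mu ^+ 2 - 1.
  rewrite subr_ge0 -[1](expr1n _ 2) ler_sqr ?nnegrE //; lra.
have pb2 : p ^+ 2 <= (mu ^+ 2 - 1) * b ^+ 2.
  have [->|pp0] := eqVneq p 0.
    by rewrite expr0n /=; apply: mulr_ge0 => //; apply: sqr_ge0.
  have pg : 0 < p by rewrite lt0r pp0.
  have h4 : p ^+ 2 * p ^+ 2 <= b ^+ 2 * q ^+ 2 by nra.
  have h5 : p ^+ 2 * p ^+ 2 <= b ^+ 2 * ((mu ^+ 2 - 1) * p ^+ 2).
    apply: (le_trans h4); apply: ler_wpM2l; [exact: sqr_ge0| exact: q2].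
  have pp2 : 0 < p ^+ 2 by rewrite exprn_gt0.
  nra.
have fin : NE ^+ 2 <= (mu * NF) ^+ 2.
  rewrite ne exprMn nf. nra.
have mu0 : 0 <= mu by lra.
rewrite -ler_sqr ?nnegrE ?mulr_ge0 //.
Qed.
End IP.
Arguments ip_self0 {R V ip}.
Arguments core {R V ip}.

Section Dist.
Variables (R : realType) (V : normedModType R).

Lemma dist_le (v x : V) (S : set V) : S x -> dist v S <= `|v - x|.
Proof.
move=> Sx; apply: ge_inf; last by exists x.
by exists 0 => _ [y _ <-]; apply: normr_ge0.
Qed.

Lemma dist_ge (v : V) (S : set V) c : S !=set0 ->
  (forall x, S x -> c <= `|v - x|) -> c <= dist v S.
Proof.
move=> [x Sx] h; apply: lb_le_inf; first by exists `|v - x|, x.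
by move=> _ [y Sy <-]; apply: h.
Qed.

Lemma dist_ge0 (v : V) (S : set V) : S !=set0 -> 0 <= dist v S.
Proof. by move=> h; apply: dist_ge => // x _; apply: normr_ge0. Qed.
End Dist.

Section Proj.
Variables (R : realType) (V : normedModType R) (ip : V -> V -> R).
Hypothesis hip : inner_product ip.

Lemma orthB (E : set V) a b : orth ip E a -> orth ip E b -> orth ip E (a - b).
Proof. by move=> ha hb w Ew; rewrite ipBl // ha // hb // subr0. Qed.

Lemma pyth a b : ip a b = 0 -> `|a + b| ^+ 2 = `|a| ^+ 2 + `|b| ^+ 2.
Proof. by move=> h; rewrite (@normD2 _ _ _ hip) h mulr0 addr0. Qed.

Lemma best_affine n (c : 'I_n -> V) (a v : V) :
  exists x, affine a (span_of c) x /\ orth ip (span_of c) (v - x) /\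
    `|v - x| <= dist v (affine a (span_of c)).
Proof.
have [p [sp op]] := @proj_ex _ _ _ hip _ c (v - a).
exists (a + p); split; first by exists p.
have o : orth ip (span_of c) (v - (a + p)).
  by move=> z; rewrite opprD addrA; apply: orth_span.
split=> //; apply: dist_ge; first by exists (a + p), p.
move=> _ [z sz <-].
have -> : v - (a + z) = (v - (a + p)) + (p - z).
  by rewrite !opprD !addrA subrK.
rewrite -ler_sqr ?nnegrE ?normr_ge0 // [X in _ <= X]pyth.
  by rewrite lerDl sqr_ge0.
by apply: (o (p - z)); apply: spanB.
Qed.
End Proj.
Arguments best_affine {R V ip}.

Section PW.
Variables (R : realType) (V : normedModType R) (ip : V -> V -> R).
Hypothesis hip : inner_product ip.
Variables (m : nat) (bW : 'I_m -> V) (P : V -> V).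
Hypothesis hP : forall v, span_of bW (P v) /\ orth ip (span_of bW) (v - P v).

Lemma Ppyth v : `|v| ^+ 2 = `|P v| ^+ 2 + `|v - P v| ^+ 2.
Proof.
rewrite -{1}(subrKC (P v) v) (@pyth _ _ _ hip) //.
by rewrite (@ipC _ _ _ hip); apply: (proj2 (hP v)); apply: (proj1 (hP v)).
Qed.

Lemma Ple v : `|P v| <= `|v|.
Proof.
rewrite -ler_sqr ?nnegrE ?normr_ge0 // [X in _ <= X](Ppyth v) lerDl; exact: sqr_ge0.
Qed.

Lemma mu_ok (E : set V) (eps sigma : R) :
  (muEW P E < +oo)%E -> (muEW P E * eps%:E <= sigma%:E)%E -> 0 <= eps ->
  exists mu, [/\ 1 <= mu, forall z, E z -> `|z| <= mu * `|P z| & mu * eps <= sigma].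
Proof.
rewrite /muEW; case: asboolP => [sub|nsub] hfin hle he.
  exists 1; split => //.
  move=> z Ez; have -> : z = 0 by apply: sub.
  by rewrite normr0 mul1r normr_ge0.
have [v0 [Ev0 nv0]] : exists v, E v /\ v != 0.
  apply: contrapT => hn; apply: nsub => z Ez; apply/eqP/negPn/negP => nz.
  by apply: hn; exists z.
set S := ereal_sup _ in hfin hle.
have el : forall v, E v -> v != 0 ->
   ((if P v == 0%R then +oo else (`|v| / `|P v|)%:E) <= S)%E.
  by move=> v Ev nv; apply: ereal_sup_ubound; exists v.
have Pn0 : forall v, E v -> v != 0 -> P v != 0.
  move=> v Ev nv; apply/negP => /eqP P0; have := el v Ev nv.
  rewrite P0 eqxx leye_eq => /eqP Sinf; by rewrite Sinf ltxx in hfin.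
have e0 := el v0 Ev0 nv0; rewrite (negbTE (Pn0 v0 Ev0 nv0)) in e0.
have Pv0 : 0 < `|P v0| by rewrite normr_gt0 Pn0.
have one : 1 <= `|v0| / `|P v0| by rewrite ler_pdivlMr // mul1r Ple.
have Sfin : S \is a fin_num.
  rewrite fin_numE; apply/andP; split; last by rewrite lt_eqF.
  apply/negP => /eqP Sm; by rewrite Sm leeNy_eq in e0.
exists (fine S); split.
- by rewrite -lee_fin fineK //; apply: le_trans e0; rewrite lee_fin.
- move=> z Ez; have [->|nz] := eqVneq z 0.
    rewrite normr0 mulr_ge0 ?normr_ge0 //.
    by rewrite -lee_fin fineK //; apply: le_trans e0; rewrite lee_fin; lra.
  have := el z Ez nz; rewrite (negbTE (Pn0 z Ez nz)) -(fineK Sfin) lee_fin.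
  by rewrite ler_pdivrMr // normr_gt0 Pn0.
- by rewrite -lee_fin EFinM fineK.
Qed.

Lemma pbdw n (c : 'I_n -> V) (ub u us : V) (mu eps : R) :
  1 <= mu -> (forall z, span_of c z -> `|z| <= mu * `|P z|) ->
  dist u (affine ub (span_of c)) <= eps ->
  affine (P u) (orth ip (span_of bW)) us ->
  (forall v, affine (P u) (orth ip (span_of bW)) v ->
     dist us (affine ub (span_of c)) <= dist v (affine ub (span_of c))) ->
  `|u - us| <= mu * eps.
Proof.
move=> mu1 hmu hu [t0 ot0 ust] hmin.
set Vk := affine ub (span_of c).
have [x [[px spx xE] [ox dx]]] := best_affine hip _ c ub u.
have [vs [[pv spv vE] [ov dv]]] := best_affine hip _ c ub us.
set f := u - x; set g := us - vs; set h := x - vs.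
have sh : span_of c h by rewrite /h -xE -vE opprD addrACA subrr add0r; apply: spanB.
set v := us - (g - P g).
have av : affine (P u) (orth ip (span_of bW)) v.
  exists (t0 - (g - P g)); last by rewrite /v -ust addrA.
  by apply: orthB => //; apply: (proj2 (hP g)).
have dvle : dist v Vk <= `|P g|.
  have -> : P g = v - vs by rewrite /v addrAC -/g opprB addrC subrK.
  by apply: dist_le; exists pv.
have gle : `|g| <= `|P g| := le_trans dv (le_trans (hmin v av) dvle).
have gW : span_of bW g.
  have : `|g - P g| ^+ 2 <= 0.
    have := Ppyth g; have : `|g| ^+ 2 <= `|P g| ^+ 2.
      by rewrite ler_sqr ?nnegrE ?normr_ge0.
    lra.
  move=> h0; have : `|g - P g| = 0.
    by apply/eqP; rewrite -sqrf_eq0; apply/eqP/le_anti; rewrite h0 sqr_ge0.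
  move/normr0_eq0/eqP; rewrite subr_eq0 => /eqP ->.
  exact: (proj1 (hP g)).
have fle : `|f| <= eps := le_trans dx hu.
apply: (le_trans (y := mu * `|f|)); last first.
  by rewrite ler_wpM2l //; lra.
have := core hip (span_of bW) (P f) (P h) (f - P f) (h - P h) g (u - us) mu.
rewrite (subrKC (P f) f); apply.
- by move=> a b; apply: spanB.
- exact: (proj1 (hP f)).
- exact: (proj1 (hP h)).
- exact: gW.
- exact: (proj2 (hP f)).
- exact: (proj2 (hP h)).
- rewrite -ust opprD addrA; apply: orthB => //; exact: (proj2 (hP u)).
- rewrite !subrKC /f /h /g addrA subrK opprB addrA subrK.
  by rewrite -ust.
- by rewrite subrKC; exact: (ov h sh).
- by rewrite !subrKC; exact: (ox h sh).
- by rewrite subrKC; apply: hmu.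
- exact: mu1.
Qed.
End PW.

Theorem mainTheorem7 (R : realType) (V Z : completeNormedModType R)
  (ipV : V -> V -> R) (ipZ : Z -> Z -> R)
  (hipV : inner_product ipV) (hipZ : inner_product ipZ)
  (d : nat) (Y : set 'rV[R]_d) (hY : compact Y)
  (A : 'rV[R]_d -> {linear V -> Z}) (Ainv : 'rV[R]_d -> Z -> V) (f : 'rV[R]_d -> Z)
  (hAinv : forall y, Y y -> cancel (A y) (Ainv y) /\ cancel (Ainv y) (A y))
  (hAcont : opnorm_continuous_on Y (fun y => (A y : V -> Z)))
  (hfcont : {within Y, continuous f})
  (r Rb : R) (hr : 0 < r) (hrR : r <= Rb)
  (hAb : forall y, Y y -> forall v, `|A y v| <= Rb * `|v|)
  (hAinvb : forall y, Y y -> forall z, `|Ainv y z| <= r^-1 * `|z|)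
  (W : set V) (m : nat) (hW : subspace_of_dim W m)
  (P : V -> V) (hP : forall v, W (P v) /\ orth ipV W (v - P v))
  (K : nat) (Mk : 'I_K -> set V)
  (hM : \bigcup_(k in [set: 'I_K]) Mk k = manifold Y Ainv f)
  (ubar : 'I_K -> V) (Vbar : 'I_K -> set V) (nk : 'I_K -> nat)
  (hVbar : forall k, subspace_of_dim (Vbar k) (nk k) /\ (nk k <= m)%N)
  (eps : 'I_K -> R)
  (heps : forall k u, Mk k u -> dist u (affine (ubar k) (Vbar k)) <= eps k)
  (sigma : R) (hsigma : 0 <= sigma)
  (hadm : forall k, (muEW P (Vbar k) < +oo)%E /\
                    (muEW P (Vbar k) * (eps k)%:E <= sigma%:E)%E)
  (ustar : 'I_K -> V -> V)
  (hustar : forall k, pbdw_estimator ipV W (affine (ubar k) (Vbar k)) (ustar k))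
  (y : 'rV[R]_d) (hy : Y y)
  (kstar : 'I_K)
  (hkstar : forall k,
     surrogate Y (fun y => (A y : V -> Z)) f (ustar kstar (P (Ainv y (f y))))
     <= surrogate Y (fun y => (A y : V -> Z)) f (ustar k (P (Ainv y (f y)))))
  (ystar : 'rV[R]_d) (hystar : Y ystar)
  (hystar_min : forall y', Y y' ->
     resid (fun y => (A y : V -> Z)) f (ustar kstar (P (Ainv y (f y)))) ystar
     <= resid (fun y => (A y : V -> Z)) f (ustar kstar (P (Ainv y (f y)))) y') :
  let kappa := Rb / r in
  let M := manifold Y Ainv f in
  ((`|Ainv y (f y) - Ainv ystar (f ystar)|)%:E
     <= (1 + kappa)%:E * delta ipV W M (kappa * sigma))%E /\
  (delta ipV W M 0 = 0%E -> (muMW ipV W M < +oo)%E ->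
   ((`|Ainv y (f y) - Ainv ystar (f ystar)|)%:E
     <= (2%:E * muMW ipV W M + 1) * (kappa * sigma)%:E)%E).

Proof.
move=> kappa M.
case: hW => bW [_ WE]; subst W.
have hP1 v := proj1 (hP v).
have hP2 v := proj2 (hP v).
set u := Ainv y (f y).
set w := P u.
set us := ustar kstar w.
set rs := resid (fun y => (A y : V -> Z)) f.
have rsE v y' : rs v y' = `|A y' v - f y'| by [].
have Rb0 : 0 < Rb by apply: lt_le_trans hrR.
have kappa0 : 0 <= kappa by rewrite /kappa divr_ge0 // ltW.
have F1 v y' : Y y' -> `|v - Ainv y' (f y')| <= r^-1 * rs v y'.
  move=> Yy'; have [c1 c2] := hAinv y' Yy'.
  have -> : v - Ainv y' (f y') = Ainv y' (A y' v - f y').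
    by rewrite -{2}(c2 (f y')) -linearB c1.
  exact: hAinvb.
have F2 v y' : Y y' -> rs v y' <= Rb * `|v - Ainv y' (f y')|.
  move=> Yy'; have [c1 c2] := hAinv y' Yy'.
  by rewrite rsE -{1}(c2 (f y')) -linearB; apply: hAb.
have Mu : (\bigcup_(k in [set: 'I_K]) Mk k) u by rewrite hM; exists y.
case: Mu => k0 _ Mu.
have [c [_ VE]] := (proj1 (hVbar k0)).
have hepsk := heps k0 u Mu; rewrite VE in hepsk.
have eps0 : 0 <= eps k0.
  apply: le_trans hepsk; apply: dist_ge0; exists (ubar k0), 0 => //.
    exact: span0.
  by rewrite addr0.
have [mu [mu1 hmu hmueps]] : exists mu, [/\ 1 <= mu,
    forall z, span_of c z -> `|z| <= mu * `|P z| & mu * eps k0 <= sigma].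
  have [hA hB] := hadm k0; rewrite VE in hA hB.
  exact: (@mu_ok _ _ _ hipV _ _ _ hP _ _ _ hA hB eps0).
have Ww : span_of bW w by apply: hP1.
set us0 := ustar k0 w.
have [aus0 mins0] := hustar k0 w Ww; rewrite VE in mins0.
have bnd0 : `|u - us0| <= sigma.
  apply: le_trans hmueps.
  exact: (@pbdw _ _ _ hipV _ _ _ hP _ _ _ _ _ _ _ mu1 hmu hepsk aus0 mins0).
have chain : rs us ystar <= Rb * sigma.
  have h1 : rs us ystar <= surrogate Y (fun y => (A y : V -> Z)) f us.
    apply: lb_le_inf; first by exists (rs us y), y.
    by move=> _ [y' Yy' <-]; apply: hystar_min.
  have h2 := hkstar k0.
  have h3 : surrogate Y (fun y => (A y : V -> Z)) f us0 <= rs us0 y.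
    apply: ge_inf; last by exists y.
    by exists 0 => _ [y' _ <-]; apply: normr_ge0.
  have h4 : rs us0 y <= Rb * sigma.
    apply: le_trans (F2 us0 y hy) _; rewrite ler_pM2l //.
    by rewrite distrC.
  exact: le_trans h1 (le_trans h2 (le_trans h3 h4)).
set uys := Ainv ystar (f ystar).
have d1 : `|us - uys| <= kappa * sigma.
  apply: le_trans (F1 us ystar hystar) _.
  apply: le_trans (_ : r^-1 * (Rb * sigma) <= _); first by rewrite ler_pM2l ?invr_gt0.
  by rewrite /kappa mulrCA mulrA.
have d2 : `|us - uys| <= kappa * `|u - us|.
  apply: le_trans (F1 us ystar hystar) _.
  apply: le_trans (_ : r^-1 * rs us y <= _).
    by rewrite ler_pM2l ?invr_gt0 //; apply: hystar_min.
  apply: le_trans (_ : r^-1 * (Rb * `|u - us|) <= _).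
    rewrite ler_pM2l ?invr_gt0 //.
    by apply: le_trans (F2 us y hy) _; rewrite distrC.
  by rewrite /kappa mulrCA mulrA.
have [aus _] := hustar kstar w Ww.
have orthe : orth ipV (span_of bW) (u - us).
  case: aus => t0 ot0 ust; have -> : us = w + t0 by rewrite ust.
  rewrite opprD addrA.
  by apply: orthB => //; apply: hP2.
have Mu' : M u by exists y.
have Muys : M uys by exists ystar.
have Msu : Msig M (kappa * sigma) u.
  change (dist u M <= kappa * sigma); apply: le_trans (@dist_le _ _ u _ _ Mu') _.
  by rewrite subrr normr0 mulr_ge0.
have Msus : Msig M (kappa * sigma) us.
  by change (dist us M <= kappa * sigma); apply: le_trans (@dist_le _ _ us _ _ Muys) d1.
have Dle : ((`|u - us|)%:E <= delta ipV (span_of bW) M (kappa * sigma))%E.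
  by apply: ereal_sup_ubound; exists u, us; split.
have tot : `|u - uys| <= `|u - us| + `|us - uys|.
  have -> : u - uys = (u - us) + (us - uys) by rewrite addrA subrK.
  exact: ler_normD.
split.
  apply: (@le_trans _ _ ((1 + kappa) * `|u - us|)%:E).
    by rewrite lee_fin mulrDl mul1r; lra.
  rewrite EFinM; apply: lee_wpmul2l => //; rewrite lee_fin; lra.
move=> d0 hmuM.
have s0 : 0 <= kappa * sigma by rewrite mulr_ge0.
have [sz|spos] : kappa * sigma = 0 \/ 0 < kappa * sigma.
  by move: s0; rewrite le0r => /orP[/eqP ->|->]; [left|right].
  rewrite sz mule0.
  move: Dle; rewrite sz d0 lee_fin => Dle.
  rewrite lee_fin; move: d1; rewrite sz => d1; lra.
rewrite /muMW /= in hmuM *.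
set S := ereal_sup _ in hmuM *.
have hS : (delta ipV (span_of bW) M (kappa * sigma) * ((kappa * sigma)^-1)%:E <= S)%E.
  by apply: ereal_sup_ubound; exists (kappa * sigma).
have DS : ((`|u - us| / (kappa * sigma))%:E <= S)%E.
  apply: le_trans hS; rewrite EFinM; apply: lee_wpmul2r => //.
  by rewrite lee_fin invr_ge0.
have Sfin : S \is a fin_num.
  rewrite fin_numE; apply/andP; split.
    apply/negP => /eqP Sm; move: DS; by rewrite Sm leeNy_eq.
  apply/negP => /eqP Sp; move: hmuM; rewrite Sp.
  by rewrite mulry gtr0_sg ?invr_gt0 // mul1e ltxx.
move: DS; rewrite -(fineK Sfin) lee_fin ler_pdivrMr // => DS.
rewrite -(fineK Sfin) -!EFinM lee_fin /=.
have -> : 2 * (2^-1 * fine S) = fine S by rewrite mulrA divff ?mul1r.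
rewrite mulrDl mul1r; lra.
Qed.
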